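(* Let $(H,wt)$ be a weighted graph. For each $a\in V(H)$ take a copy of $C_{wt(a)}$ and fix a vertex $v(a)$ of it, and let $G$ be the disjoint union of these copies together with a dashed edge $v(a)\dashrightarrow v(b)$ for each edge $ab\in E(H)$. Then $X_{(H,wt)}(x)=\mathscr{X}_G(x)$.
   Context: A weighted graph is a finite simple graph $H$ with $wt:V(H)\to\mathbb{P}$; its extended chromatic symmetric function is $X_{(H,wt)}(x)=\sum_\kappa\prod_{a\in V(H)}x_{\kappa(a)}^{wt(a)}$ over proper colourings $\kappa:V(H)\to\mathbb{P}$ of $H$ (adjacent vertices get different colours). $C_m$ is the directed cycle on $m$ vertices all of whose edges are double (for $m=1$ a single vertex with no edges). An edge-coloured digraph is a finite simple digraph with each edge dashed ($\dashrightarrow$), solid ($\rightarrow$) or double ($\Rightarrow$); its proper vertex-colourings are $\kappa:V\to\mathbb{P}$ with $\kappa(a)\ne\kappa(b)$, $\kappa(a)<\kappa(b)$, $\kappa(a)\le\kappa(b)$ for dashed, solid, double edges $(a,b)$ respectively, and $\mathscr{X}_G(x)=\sum_\kappa\prod_{a}x_{\kappa(a)}$ over them. *)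

(* Defs.v *)
From HB Require Import structures.
From mathcomp Require Import all_boot all_order all_algebra.
From mathcomp.multinomials Require Import mpoly.
Set Implicit Arguments. Unset Strict Implicit. Unset Printing Implicit Defensive.
Import GRing.Theory.
Local Open Scope ring_scope.

(* A formal power series in x_1, x_2, ... is determined by its specialisations
   x_{N+1} = x_{N+2} = ... = 0 for all N.  We represent the colour i+1 by
   i : 'I_N, so the specialisation to N variables is a polynomial in
   {mpoly int[N]} whose variable 'X_i stands for x_{i+1}. *)

Definition properH (V : finType) (e : rel V) (N : nat) (k : {ffun V -> 'I_N}) :=
  [forall a, forall b, e a b ==> (k a != k b)].

Definition XH (V : finType) (e : rel V) (wt : V -> nat) (N : nat)
  : {mpoly int[N]} :=
  \sum_(k : {ffun V -> 'I_N} | properH e k) \prod_(a : V) 'X_(k a) ^+ wt a.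

Inductive ekind := Dashed | Solid | Double.

Definition properG (T : finType) (ek : T -> T -> option ekind) (N : nat)
  (k : {ffun T -> 'I_N}) :=
  [forall x, forall y,
     match ek x y with
     | Some Dashed => k x != k y
     | Some Solid => (nat_of_ord (k x) < nat_of_ord (k y))%N
     | Some Double => (nat_of_ord (k x) <= nat_of_ord (k y))%N
     | None => true
     end].

Definition XG (T : finType) (ek : T -> T -> option ekind) (N : nat)
  : {mpoly int[N]} :=
  \sum_(k : {ffun T -> 'I_N} | properG ek k) \prod_(x : T) 'X_(k x).

(** Vertices: pairs (a, i) with i : 'I_(wt a); the copy of
    C_m (m = wt a) has double edges (a,i) => (a, i+1 mod m) when m >= 2
    (for m = 1 it is a single vertex with no edges).  For each edge ab of H
    there is one dashed edge between v(a) and v(b), oriented from the vertex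
    of smaller enumeration rank to the larger one (the orientation of a
    dashed edge does not affect properness). *)
Definition Gvert (V : finType) (wt : V -> nat) : finType :=
  {a : V & 'I_(wt a)}.

Definition Gedge (V : finType) (e : rel V) (wt : V -> nat)
  (v : forall a : V, 'I_(wt a)) (x y : Gvert wt) : option ekind :=
  if tag x == tag y then
    (if (1 < wt (tag x))%N
        && (nat_of_ord (tagged y) == ((nat_of_ord (tagged x)).+1 %% wt (tag x))%N)
     then Some Double else None)
  else if [&& e (tag x) (tag y), tagged x == v (tag x), tagged y == v (tag y)
           & (nat_of_ord (enum_rank (tag x)) < nat_of_ord (enum_rank (tag y)))%N]
  then Some Dashed else None.

(* Main.v *)
Require Import Defs.
From HB Require Import structures.
From mathcomp Require Import all_boot all_order all_algebra.
From mathcomp.multinomials Require Import mpoly.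
From mathcomp Require Import zify.
Set Implicit Arguments. Unset Strict Implicit.
Import GRing.Theory.
Local Open Scope ring_scope.

Section S.
Variables (V : finType) (e : rel V) (wt : V -> nat).
Hypothesis e_sym : forall a b : V, e a b = e b a.
Hypothesis e_irr : forall a : V, e a a = false.
Hypothesis wt_pos : forall a : V, (0 < wt a)%N.
Variables (v : forall a : V, 'I_(wt a)) (N : nat).

Lemma const_fib (k : {ffun Gvert wt -> 'I_N}) : properG (Gedge e v) k ->
  forall a (i : 'I_(wt a)), k (Tagged _ i) = k (Tagged _ (v a)).
Proof.
move=> /forallP Hk a.
have [m1|m2] := leqP (wt a) 1.
  move=> i; congr (k (Tagged _ _)); apply/val_inj => /=.
  by have := ltn_ord i; have := ltn_ord (v a); lia.
pose f (n : nat) : nat := k (Tagged (fun a => 'I_(wt a)) (Ordinal (ltn_pmod n (wt_pos a)))).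
have step n : (f n <= f n.+1)%N.
  have := forallP (Hk (Tagged (fun a => 'I_(wt a)) (Ordinal (ltn_pmod n (wt_pos a)))))
    (Tagged (fun a => 'I_(wt a)) (Ordinal (ltn_pmod n.+1 (wt_pos a)))).
  rewrite /Gedge /= eqxx m2 /=.
  rewrite ifT //.
  by rewrite -[(n %% wt a).+1]addn1 modnDml addn1.

have mono n d : (f n <= f (n + d))%N.
  elim: d => [|d IH]; first by rewrite addn0.
  by apply: leq_trans IH _; rewrite addnS.
have fi (i : 'I_(wt a)) : f i = k (Tagged _ i).
  by rewrite /f; congr (nat_of_ord (k (Tagged _ _))); apply/val_inj; rewrite /= modn_small.
have fm : f (wt a) = f 0.
  by rewrite /f; congr (nat_of_ord (k (Tagged _ _))); apply/val_inj; rewrite /= modnn mod0n.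
have eq0 (i : 'I_(wt a)) : k (Tagged _ i) = f 0 :> nat.
  rewrite -fi; apply/eqP; rewrite eqn_leq; apply/andP; split.
    rewrite -fm; have := mono i (wt a - i)%N; rewrite subnKC //; exact: ltnW.
  by have := mono 0%N i.
by move=> i; apply/val_inj; rewrite /= (eq0 i) (eq0 (v a)).
Qed.

Definition hh (j : {ffun V -> 'I_N}) : {ffun Gvert wt -> 'I_N} := [ffun x => j (tag x)].

Lemma properGh j : properG (Gedge e v) (hh j) = properH e j.
Proof.
apply/forallP/forallP.
- move=> H a; apply/forallP => b; apply/implyP => eab.
  have nab : a != b by apply/eqP => E; subst; rewrite e_irr in eab.
  wlog lt : a b eab nab / (enum_rank a < enum_rank b)%N.
    move=> W; have [l|l] := ltnP (enum_rank a) (enum_rank b); first exact: W.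
    rewrite eq_sym; apply: W; rewrite 1?e_sym // 1?eq_sym //.
    rewrite ltn_neqAle l andbT; apply/negP => /eqP E.
    by move/negP: nab; apply; apply/eqP/enum_rank_inj/val_inj.
  have := forallP (H (Tagged (fun a => 'I_(wt a)) (v a))) (Tagged (fun a => 'I_(wt a)) (v b)).
  by rewrite /Gedge /= (negbTE nab) eab !eqxx lt /= !ffunE.
- move=> H x; apply/forallP => y; rewrite /Gedge.
  case: eqP => [E|ne].
    by case: ifP => // _; rewrite !ffunE E.
  case: ifP => // /and4P [exy _ _ _].
  by rewrite !ffunE; exact: (implyP (forallP (H _) _) exy).
Qed.

Lemma mainS : XH e wt N = XG (Gedge e v) N.
Proof.
rewrite /XG (reindex hh).
  apply: eq_big => j; first by rewrite properGh.
  move=> _.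
  have -> : \prod_(x : Gvert wt) 'X_(hh j x) =
     \prod_(a : V) \prod_(i : 'I_(wt a)) ('X_(j a) : {mpoly int[N]}).
    rewrite (sig_big_dep (fun a => true) (fun a i => true)
       (fun a (i : 'I_(wt a)) => ('X_(j a) : {mpoly int[N]}))) /=.
    by apply: eq_bigr => x _; rewrite ffunE.
  by apply: eq_bigr => a _; rewrite prodr_const card_ord.
exists (fun k : {ffun Gvert wt -> 'I_N} => [ffun a => k (Tagged (fun a => 'I_(wt a)) (v a))]).
  by move=> j _; apply/ffunP => a; rewrite !ffunE.
move=> k; rewrite inE => Pk; apply/ffunP => -[a i]; rewrite !ffunE /=.
by rewrite -(const_fib Pk i).
Qed.
End S.

Theorem mainTheorem13 (V : finType) (e : rel V) (wt : V -> nat)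
  (e_sym : forall a b : V, e a b = e b a) (e_irr : forall a : V, e a a = false)
  (wt_pos : forall a : V, (0 < wt a)%N)
  (v : forall a : V, 'I_(wt a)) (N : nat) :
  XH e wt N = XG (Gedge e v) N.
Proof. exact: mainS. Qed.
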